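(* Let $\mathbf{p}=(p^{(1)},\dots,p^{(n)})\in(0,1)^n$ with $\sum_i p^{(i)}=1$, and for distinct $i,j\in[n]$ let $f(C^{(i)},C^{(j)})=p^{(i)}/(p^{(i)}+p^{(j)})$. Let $\mathcal{C}=(c_1,\dots,c_\ell)$ be a cycle of $\ell\ge 3$ pairwise distinct indices in $[n]$. Then the situational curl $$\mathrm{curl}(\mathcal{C})=f(C^{(c_\ell)},C^{(c_1)})+\sum_{i=1}^{\ell-1}f(C^{(c_i)},C^{(c_{i+1})})$$ satisfies $1<\mathrm{curl}(\mathcal{C})<\ell-1$.
   Context: $C^{(1)},\dots,C^{(n)}$ are class labels; $\mathbf{p}$ is the categorical distribution of the label for a fixed input state $u$, and $f$ are the corresponding situational pairwise opinions. *)

(* Defs.v *)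
From mathcomp Require Import all_boot all_order all_algebra.
Set Implicit Arguments. Unset Strict Implicit. Unset Printing Implicit Defensive.
Import Order.TTheory GRing.Theory Num.Theory.
Local Open Scope ring_scope.

Definition opinion (R : realFieldType) (n : nat) (p : 'I_n -> R) (i j : 'I_n) : R :=
  p i / (p i + p j).

Definition curl (R : realFieldType) (n : nat) (p : 'I_n -> R) (x0 : 'I_n)
  (c : seq 'I_n) : R :=
  opinion p (last x0 c) (head x0 c)
  + \sum_(i < (size c).-1) opinion p (nth x0 c i) (nth x0 c i.+1).

(* Main.v *)
Require Import Defs.
From mathcomp Require Import all_boot all_order all_algebra.
From mathcomp Require Import zify ring lra.
Import Order.TTheory GRing.Theory Num.Theory.
Local Open Scope ring_scope.

Lemma frac_gt (R : realFieldType) (x y S : R) :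
  0 < x -> 0 < y -> x + y < S -> x / S < x / (x + y).
Proof.
move=> hx hy hS.
rewrite ltr_pM2l // ltf_pV2 // ?posrE //; lra.
Qed.

Lemma third_idx (m : nat) (u v : 'I_m.+1) : (2 <= m)%N ->
  exists w : 'I_m.+1, (w != u) && (w != v).
Proof.
move=> hm.
pose k := if (0 != val u)%N && (0 != val v)%N then 0%N
          else if (1 != val u)%N && (1 != val v)%N then 1%N else 2%N.
have hk : (k <= m)%N by rewrite /k; case: ifP => _ //; case: ifP => _; lia.
exists (inord k).
rewrite -!(inj_eq val_inj) /= inordK ?ltnS //.
move: (ltn_ord u) (ltn_ord v).
rewrite /k; case: ifP => H1; first by [].
case: ifP => H2; first by [].
move: H1 H2; rewrite /=; lia.
Qed.

Theorem lemma1 (R : realFieldType) (n : nat) (p : 'I_n -> R)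
  (hp : forall i, 0 < p i < 1) (hsum : \sum_(i < n) p i = 1)
  (c : seq 'I_n) (x0 : 'I_n) (huniq : uniq c) (hsize : (3 <= size c)%N) :
  1 < curl p x0 c < (size c)%:R - 1.
Proof.
set l := size c in hsize *.
have [m hl] : exists m, l = m.+1 by exists l.-1; lia.
have hm : (2 <= m)%N by lia.
pose a (k : 'I_m.+1) := p (nth x0 c k).
have apos : forall k, 0 < a k by move=> k; case/andP: (hp (nth x0 c k)).
pose S := \sum_(k < m.+1) a k.
have pair_lt : forall u v : 'I_m.+1, u != v -> a u + a v < S.
  move=> u v huv.
  have [w /andP [hwu hwv]] := @third_idx m u v hm.
  rewrite /S (bigD1 u) //= (bigD1 v) /= ?andbT //.
  2: by rewrite eq_sym.
  rewrite addrA ltrDl (bigD1 w) /= ?hwu ?hwv //.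
  have h1 := apos w.
  have h2 : 0 <= \sum_(i < m.+1 | ((i != u) && (i != v)) && (i != w)) a i.
    by apply: sumr_ge0 => k _; exact: ltW.
  lra.
have Spos : 0 < S by apply: (lt_trans _ (pair_lt ord0 ord_max _)) => //;
  [ rewrite addr_gt0 | rewrite -(inj_eq val_inj) /= ; lia].
have hcurl : curl p x0 c = a ord_max / (a ord_max + a ord0)
   + \sum_(i < m) a (widen_ord (leqnSn m) i) / (a (widen_ord (leqnSn m) i) + a (lift ord0 i)).
  rewrite /curl -nth_last -nth0 -/l hl /=.
  congr (_ + _); apply: eq_bigr => i _.
have Sw : S = \sum_(i < m) a (widen_ord (leqnSn m) i) + a ord_max by rewrite /S big_ord_recr.
have Sl : S = a ord0 + \sum_(i < m) a (lift ord0 i) by rewrite /S big_ord_recl.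
have neq1 : forall i : 'I_m, widen_ord (leqnSn m) i != lift ord0 i.
  by move=> i; rewrite -(inj_eq val_inj) /= /bump /=; lia.
have neq0 : (ord_max : 'I_m.+1) != ord0 by rewrite -(inj_eq val_inj) /=; lia.
apply/andP; split.
  rewrite hcurl.
  have -> : (1 : R) = a ord_max / S + \sum_(i < m) a (widen_ord (leqnSn m) i) / S.
    by rewrite -mulr_suml -mulrDl addrC -Sw divff // gt_eqF.
  apply: ltr_leD; first by apply: frac_gt => //; exact: pair_lt.
  apply: ler_sum => i _; apply: ltW; apply: frac_gt => //; exact: pair_lt.
have -> : l%:R = (m.+1)%:R :> R by rewrite hl.
suff : 1 < (m.+1)%:R - curl p x0 c by lra.
have key : m.+1%:R - curl p x0 c = a ord0 / (a ord_max + a ord0)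
   + \sum_(i < m) a (lift ord0 i) / (a (widen_ord (leqnSn m) i) + a (lift ord0 i)).
  have h1 : forall x y : R, 0 < x -> 0 < y -> 1 - x / (x + y) = y / (x + y).
    move=> x y hx hy; field; rewrite gt_eqF // addr_gt0 //.
  rewrite hcurl -(h1 _ _ (apos ord_max) (apos ord0)).
  under [X in _ = _ + X]eq_bigr => i _ do rewrite -(h1 _ _ (apos _) (apos _)).
  have -> : (m.+1)%:R = m%:R + 1 :> R by rewrite -addn1 natrD.
  rewrite big_split /= sumr_const card_ord.
  rewrite sumrN; ring.
rewrite key addrC.
have -> : (1 : R) = \sum_(i < m) a (lift ord0 i) / S + a ord0 / S.
  by rewrite -mulr_suml -mulrDl addrC -Sl divff // gt_eqF.
apply: ler_ltD.
  apply: ler_sum => i _; apply: ltW; rewrite addrC; apply: frac_gt => //.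
  rewrite addrC; exact: pair_lt.
rewrite addrC; apply: frac_gt => //; rewrite addrC; exact: pair_lt.
Qed.
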